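(* $\mathtt{RealTime_{IA}}\subseteq\mathtt{pred}$-$\mathtt{dio}$-$\mathtt{ESO}$-$\mathtt{HORN}$: for every iterative array $\mathcal A$ (sequential input, neighborhood $\{-1,0,1\}$, output on the first cell) there is a predecessor Horn formula with diagonal input-output $\Phi$ such that for all $w\in\Sigma^+$, $\mathcal A$ accepts $w$ in real time iff $\langle w\rangle\models\Phi$.
   Context: Fix a finite alphabet $\Sigma$. A nonempty word $w=w_1\cdots w_n$ is represented by the structure $\langle w\rangle=([1,n];(Q_s)_{s\in\Sigma},\mathtt{min},\mathtt{max},\mathtt{suc},\mathtt{pred})$ with $Q_s(i)\iff w_i=s$, $\mathtt{min}(i)\iff i=1$, $\mathtt{max}(i)\iff i=n$, $\mathtt{suc}(i)=\min(i+1,n)$, $\mathtt{pred}(i)=\max(i-1,1)$; $x-k$ denotes $\mathtt{pred}^k(x)$. A predecessor Horn formula with diagonal input-output is $\Phi=\exists\mathbf{R}\forall x\forall y\,\psi(x,y)$, $\mathbf{R}$ a finite set of binary relation symbols, $\psi$ a conjunction of Horn clauses in $x,y$ over $\{(Q_s)_{s\in\Sigma},\mathtt{min},\mathtt{max},\mathtt{suc},\mathtt{pred},=\}\cup\mathbf{R}$, each of the form $\delta_1\wedge\cdots\wedge\delta_r\to\delta_0$ with $\delta_0$ an atom $R(x,y)$ ($R\in\mathbf{R}$) or $\bot$, each hypothesis being one of: $Q_s(x-a)\wedge x=y$ ($s\in\Sigma$, $a\ge0$); $U(x-a)$, $\neg U(x-a)$, $U(y-a)$, $\neg U(y-a)$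 ($U\in\{\mathtt{min},\mathtt{max}\}$, $a\ge0$); $S(x-a,y-b)$ or $S(y-b,x-a)$ ($S\in\mathbf{R}$, $a,b\ge0$). $\mathtt{pred}$-$\mathtt{dio}$-$\mathtt{ESO}$-$\mathtt{HORN}$ is the class of languages $\{w\in\Sigma^+:\langle w\rangle\models\Phi\}$. An iterative array is a cellular automaton with finite state set $Q\supseteq\Sigma$, accepting states $Q_{accept}\subseteq Q$, neighborhood $\{-1,0,1\}$, transition function $\delta:Q^3\to Q$ and an input transition function $\delta_{input}$ for the first cell. On input $w=w_1\cdots w_n$ it uses cells $1,\dots,n$; cells outside are permanently in a state $\sharp$, cells not yet reached by information are in a quiescent state $\lambda$. The letter $w_i$ is given to cell 1 at time $i$ (state of cell 1 at time $i\le n$ computed by $\delta_{input}$ from $w_i$ and the previous neighbourhood states); other updates are $\langle c,t\rangle=\delta(\langle c-1,t-1\rangle,\langle c,t-1\rangle,\langle c+1,t-1\rangle)$. The array accepts $w$ in real time iff $\langle 1,n\rangle\in Q_{accept}$; $\mathtt{RealTime_{IA}}$ is the class of languages so accepted. *)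

(* Defs.v *)
From Stdlib Require Import List.
From mathcomp Require Import all_boot.
Set Implicit Arguments. Unset Strict Implicit. Unset Printing Implicit Defensive.

(* ===================== Words and positions =====================
   A nonempty word w = w_1 ... w_n (n = size w) has positions 1..n.
   Letter at position p is  onth w (p-1)  (onth is 0-indexed). *)

(* pred^a(p) = max(p - a, 1)  (x - a in the paper) *)
Definition predk (a p : nat) : nat := maxn (p - a) 1.

Record IA (Sigma : finType) := MkIA {
  ia_Q : finType;
  ia_accept : pred ia_Q;
  ia_sharp : ia_Q;
  ia_lambda : ia_Q;
  ia_delta : ia_Q -> ia_Q -> ia_Q -> ia_Q;          (* delta(left,self,right) *)
  ia_delta_in : Sigma -> ia_Q -> ia_Q -> ia_Q -> ia_Q;
      (* input transition of cell 1: letter, then (left,self,right) *)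
  ia_quiescent : ia_delta ia_lambda ia_lambda ia_lambda = ia_lambda
}.

Fixpoint ia_conf (Sigma : finType) (A : IA Sigma) (w : seq Sigma) (t : nat)
  : nat -> ia_Q A :=
  let n := size w in
  match t with
  | 0 => fun c => if (1 <= c <= n) then @ia_lambda Sigma A else @ia_sharp Sigma A
  | t'.+1 => fun c =>
      let prev := @ia_conf Sigma A w t' in
      if (1 <= c <= n) then
        match (if c == 1 then onth w t' else None) with
        | Some a => @ia_delta_in Sigma A a (prev c.-1) (prev c) (prev c.+1)
        | None => @ia_delta Sigma A (prev c.-1) (prev c) (prev c.+1)
        end
      else @ia_sharp Sigma A
  end.

Definition ia_accepts (Sigma : finType) (A : IA Sigma) (w : seq Sigma) : Prop :=
  @ia_accept Sigma A (ia_conf A w (size w) 1).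

(* ============ Predecessor Horn formulas with diagonal input-output ============
   Relation symbols of R are natural numbers (the finite set R is the set of
   symbols occurring in the formula). *)

Inductive var := VX | VY.
Inductive unpred := Pmin | Pmax.

Inductive hyp (Sigma : Type) :=
  | HLetter of Sigma & nat
      (* HLetter s a  :  Q_s(x-a) /\ x = y *)
  | HUn of bool & unpred & var & nat
      (* HUn b U v a  :  U(v-a) if b = true, ~ U(v-a) if b = false *)
  | HRel of nat & bool & nat & nat.
      (* HRel S true a b   :  S(x-a, y-b)
         HRel S false a b  :  S(y-b, x-a) *)

(* A Horn clause  delta_1 /\ ... /\ delta_r -> delta_0, where the conclusion
   is  Some R  for the atom R(x,y)  or  None  for bottom. *)
Record clause (Sigma : Type) := MkClause {
  cl_hyps : seq (hyp Sigma);
  cl_concl : option nat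
}.

(* Phi = exists R, forall x forall y, (conjunction of the clauses) *)
Definition formula (Sigma : Type) := seq (clause Sigma).

Section Semantics.
Variable Sigma : finType.
Variable w : seq Sigma.
Variable I : nat -> nat -> nat -> Prop.

Definition var_val (x y : nat) (v : var) : nat :=
  match v with VX => x | VY => y end.

Definition unpred_val (U : unpred) (p : nat) : Prop :=
  match U with Pmin => p = 1 | Pmax => p = size w end.

Definition hyp_holds (x y : nat) (h : hyp Sigma) : Prop :=
  match h with
  | HLetter s a => onth w (predk a x).-1 = Some s /\ x = y
  | HUn b U v a =>
      if b then unpred_val U (predk a (var_val x y v))
      else ~ unpred_val U (predk a (var_val x y v))
  | HRel r dir a b =>
      if dir then I r (predk a x) (predk b y)
      else I r (predk b y) (predk a x)
  end.

Definition clause_holds (x y : nat) (C : clause Sigma) : Prop :=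
  (forall h, In h (cl_hyps C) -> hyp_holds x y h) ->
  match cl_concl C with
  | Some r => I r x y
  | None => False
  end.

End Semantics.

Definition models (Sigma : finType) (w : seq Sigma) (Phi : formula Sigma) : Prop :=
  exists I : nat -> nat -> nat -> Prop,
    forall x y, 1 <= x <= size w -> 1 <= y <= size w ->
      forall C, In C Phi -> clause_holds w I x y C.

(* Main.v *)
Require Import Defs.
From Stdlib Require Import List.
From mathcomp Require Import all_boot.
From mathcomp Require Import zify.
Set Implicit Arguments. Unset Strict Implicit. Unset Printing Implicit Defensive.

Section Sim.
Variables (Sigma : finType) (A : IA Sigma).
Notation Q := (ia_Q A).
Notation sh := (ia_sharp A).
Notation la := (ia_lambda A).

Definition idx (q : Q) : nat := (nat_of_ord (enum_rank q)).+2.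

Lemma idx_inj : injective idx.
Proof. move=> p q [] /ord_inj; exact: enum_rank_inj. Qed.

Definition CD (s : Sigma) : clause Sigma := MkClause [:: HLetter s 0] (Some 0).
Definition CG1 : clause Sigma :=
  MkClause [:: HRel Sigma 0 true 1 0; HUn Sigma false Pmin VX 0] (Some 1).
Definition CG2 : clause Sigma :=
  MkClause [:: HRel Sigma 1 true 1 0; HUn Sigma false Pmin VX 0] (Some 1).
Definition Crd (s : Sigma) (b : bool) : clause Sigma :=
  MkClause [:: HLetter s 0; HUn Sigma true Pmin VY 0; HUn Sigma b Pmax VX 0]
    (Some (idx (@ia_delta_in Sigma A s sh la (if b then sh else la)))).
Definition Cro (b : bool) : clause Sigma :=
  MkClause [:: HUn Sigma true Pmin VY 0; HUn Sigma false Pmin VX 0; HUn Sigma b Pmax VX 0]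
    (Some (idx (@ia_delta Sigma A la la (if b then sh else la)))).
Definition Cdg (s : Sigma) (m r : Q) : clause Sigma :=
  MkClause [:: HLetter s 0; HUn Sigma false Pmin VY 0;
               HRel Sigma (idx m) true 1 1; HRel Sigma (idx r) true 0 1]
    (Some (idx (@ia_delta_in Sigma A s sh m r))).
Definition Coff (l m r : Q) : clause Sigma :=
  MkClause [:: HUn Sigma false Pmin VY 0; HRel Sigma 1 true 0 0;
               HRel Sigma (idx l) true 2 1; HRel Sigma (idx m) true 1 1;
               HRel Sigma (idx r) true 0 1]
    (Some (idx (@ia_delta Sigma A l m r))).
Definition Cbot (q : Q) : clause Sigma :=
  MkClause [:: HRel Sigma (idx q) true 0 0; HUn Sigma true Pmax VX 0;
               HUn Sigma true Pmax VY 0] None.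

Definition Phi : formula Sigma :=
  List.app (List.map CD (enum Sigma))
  (List.app [:: CG1; CG2]
  (List.app (List.flat_map (fun s => [:: Crd s true; Crd s false]) (enum Sigma))
  (List.app [:: Cro true; Cro false]
  (List.app (List.flat_map (fun s => List.flat_map (fun m =>
        List.map (fun r => Cdg s m r) (enum Q)) (enum Q)) (enum Sigma))
  (List.app (List.flat_map (fun l => List.flat_map (fun m =>
        List.map (fun r => Coff l m r) (enum Q)) (enum Q)) (enum Q))
   (List.flat_map (fun q => if ia_accept q then [::] else [:: Cbot q]) (enum Q))))))).

Definition Iex (w : seq Sigma) (r x y : nat) : Prop :=
  (r = 0 /\ x = y) \/ (r = 1 /\ y < x) \/
  (y <= x /\ r = idx (ia_conf A w y (x - y + 1))).

Lemma Iex_idx w q a b : Iex w (idx q) a b -> b <= a /\ q = ia_conf A w b (a - b + 1).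
Proof.
case=> [[]|[[]|[h /idx_inj]]] //.
Qed.

Lemma predk0 x : 1 <= x -> predk 0 x = x.
Proof. rewrite /predk; lia. Qed.
Lemma predkS a x : a < x -> predk a x = x - a.
Proof. rewrite /predk; lia. Qed.

Lemma conf_0 w t : ia_conf A w t 0 = sh.
Proof. by case: t. Qed.
Lemma conf0 w c : 1 <= c <= size w -> ia_conf A w 0 c = la.
Proof. by move=> h /=; rewrite h. Qed.
Lemma conf0_out w c : size w < c -> ia_conf A w 0 c = sh.
Proof. move=> h /=; case: ifP => //; lia. Qed.
Lemma conf_S1 w t s : onth w t = Some s ->
  ia_conf A w t.+1 1 = @ia_delta_in Sigma A s sh (ia_conf A w t 1) (ia_conf A w t 2).
Proof.
move=> e.
have ht : t < size w by rewrite -onthTE e.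
rewrite /=; case: ifP => [_|]; last lia.
by rewrite e conf_0.
Qed.
Lemma conf_Sc w t c : 2 <= c <= size w ->
  ia_conf A w t.+1 c = @ia_delta Sigma A (ia_conf A w t (c - 1)) (ia_conf A w t c) (ia_conf A w t (c + 1)).
Proof.
move=> h; rewrite /=; case: ifP => [_|]; last lia.
have -> : (c == 1) = false by lia.
by rewrite subn1 addn1.
Qed.

Lemma In_enum (T : finType) (x : T) : In x (enum T).
Proof.
have : x \in enum T by rewrite mem_enum.
elim: (enum T) => //= a s IH; rewrite in_cons => /orP [/eqP ->|/IH]; auto.
Qed.


Lemma In1 (T : Type) (a : T) l : In a (a :: l). Proof. by left. Qed.
Lemma In2 (T : Type) (a b : T) l : In b (a :: b :: l). Proof. by right; left. Qed.
Lemma In3 (T : Type) (a b c : T) l : In c (a :: b :: c :: l). Proof. by right; right; left. Qed.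
Lemma In4 (T : Type) (a b c d : T) l : In d (a :: b :: c :: d :: l).
Proof. by right; right; right; left. Qed.
Lemma In5 (T : Type) (a b c d e : T) l : In e (a :: b :: c :: d :: e :: l).
Proof. by right; right; right; right; left. Qed.

Ltac unf h := cbv beta iota delta [hyp_holds unpred_val var_val] in h.

Section Sound.
Variable w : seq Sigma.
Variables x y : nat.
Hypothesis hx : 1 <= x <= size w.
Hypothesis hy : 1 <= y <= size w.

Lemma Iex1 a b : Iex w 1 a b -> b < a.
Proof. case=> [[]|[[]|[_ e]]] //. Qed.

Lemma s_off l m r : clause_holds w (Iex w) x y (Coff l m r).
Proof.
move=> H; cbv [cl_concl Coff].
have h1 := H _ (In1 _ _); have h2 := H _ (In2 _ _ _); have h3 := H _ (In3 _ _ _ _).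
have h4 := H _ (In4 _ _ _ _ _); have h5 := H _ (In5 _ _ _ _ _ _).
unf h1; unf h2; unf h3; unf h4; unf h5.
rewrite predk0 in h1; last lia.
rewrite !predk0 in h2; try lia. move/Iex1: h2 => h2.
rewrite (predkS (a:=1) (x:=y)) in h3 h4 h5; try lia.
rewrite (predkS (a:=2) (x:=x)) in h3; try lia.
rewrite (predkS (a:=1) (x:=x)) in h4; try lia.
rewrite (predk0 (x:=x)) in h5; try lia.
move/Iex_idx: h3 => [_ ->]; move/Iex_idx: h4 => [_ ->]; move/Iex_idx: h5 => [_ ->].
right; right; split; first lia.
destruct y as [|t]; first lia.
rewrite (conf_Sc _ _ (c := x - t.+1 + 1)); last lia.
congr idx; f_equal; f_equal; lia.
Qed.

Lemma s_dg s m r : clause_holds w (Iex w) x y (Cdg s m r).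
Proof.
move=> H; cbv [cl_concl Cdg].
have h1 := H _ (In1 _ _); have h2 := H _ (In2 _ _ _); have h3 := H _ (In3 _ _ _ _).
have h4 := H _ (In4 _ _ _ _ _).
unf h1; unf h2; unf h3; unf h4.
rewrite predk0 in h1; last lia. case: h1 => h1 exy. subst y.
rewrite predk0 in h2; last lia.
rewrite !(predkS (a:=1) (x:=x)) in h3 h4; try lia.
rewrite (predk0 (x:=x)) in h4; try lia.
move/Iex_idx: h3 => [_ ->]; move/Iex_idx: h4 => [_ ->].
right; right; split; first lia.
destruct x as [|t]; first lia.
have -> : t.+1 - t.+1 + 1 = 1 by lia. rewrite (conf_S1 (s := s)) //.
congr idx; f_equal; f_equal; lia.
Qed.

Lemma s_rd s b : clause_holds w (Iex w) x y (Crd s b).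
Proof.
move=> H; cbv [cl_concl Crd].
have h1 := H _ (In1 _ _); have h2 := H _ (In2 _ _ _); have h3 := H _ (In3 _ _ _ _).
unf h1; unf h2; unf h3.
rewrite predk0 in h1; last lia. case: h1 => h1 exy. subst y.
rewrite predk0 in h2; last lia. subst x.
rewrite predk0 in h3; last lia.
right; right; split; first lia.
rewrite subnn add0n (conf_S1 (s := s)); last by rewrite -h1.
rewrite conf0 //. clear H.
congr idx; f_equal.
case: b h3 => h3.
  by rewrite conf0_out //; lia.
by rewrite conf0 //; lia.
Qed.

Lemma s_ro b : clause_holds w (Iex w) x y (Cro b).
Proof.
move=> H; cbv [cl_concl Cro].
have h1 := H _ (In1 _ _); have h2 := H _ (In2 _ _ _); have h3 := H _ (In3 _ _ _ _).
unf h1; unf h2; unf h3.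
rewrite predk0 in h1; last lia. subst y.
rewrite predk0 in h2; last lia.
rewrite predk0 in h3; last lia.
right; right; split; first lia.
have -> : x - 1 + 1 = x by lia.
rewrite (@conf_Sc w 0 x); last lia.
rewrite (@conf0 w (x-1)); last lia. rewrite (@conf0 w x); last lia. clear H.
congr idx; f_equal.
case: b h3 => h3.
  by rewrite conf0_out //; lia.
by rewrite conf0 //; lia.
Qed.

Lemma s_D s : clause_holds w (Iex w) x y (CD s).
Proof.
move=> H; cbv [cl_concl CD].
have h1 := H _ (In1 _ _); unf h1. case: h1 => _ ->. by left.
Qed.

Lemma s_G1 : clause_holds w (Iex w) x y CG1.
Proof.
move=> H; cbv [cl_concl CG1].
have h1 := H _ (In1 _ _); have h2 := H _ (In2 _ _ _); unf h1; unf h2.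
rewrite predk0 in h2; last lia.
rewrite predkS in h1; last lia.
right; left; split => //.
rewrite (@predk0 y) in h1; last lia.
case: h1 => [[_ e]|[[]|[_ e]]] //. lia.
Qed.

Lemma s_G2 : clause_holds w (Iex w) x y CG2.
Proof.
move=> H; cbv [cl_concl CG2].
have h1 := H _ (In1 _ _); have h2 := H _ (In2 _ _ _); unf h1; unf h2.
rewrite predk0 in h2; last lia.
rewrite predkS in h1; last lia.
rewrite (@predk0 y) in h1; last lia.
move/Iex1: h1 => h1.
right; left; split => //. lia.
Qed.

Lemma s_bot q : ~~ ia_accept q -> ia_accepts A w -> clause_holds w (Iex w) x y (Cbot q).
Proof.
move=> nq acc H; cbv [cl_concl Cbot].
have h1 := H _ (In1 _ _); have h2 := H _ (In2 _ _ _); have h3 := H _ (In3 _ _ _ _).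
unf h1; unf h2; unf h3.
rewrite predk0 in h2; last lia. rewrite predk0 in h3; last lia. subst x y.
rewrite !predk0 in h1; try lia.
move/Iex_idx: h1 => [_ e]. rewrite subnn add0n in e.
move: acc; rewrite /ia_accepts -e. by rewrite (negbTE nq).
Qed.

End Sound.


Lemma inPhi C : In C Phi <->
  (exists s, C = CD s) \/ (C = CG1 \/ C = CG2) \/
  (exists s b, C = Crd s b) \/ (exists b, C = Cro b) \/
  (exists s m r, C = Cdg s m r) \/ (exists l m r, C = Coff l m r) \/
  (exists q, ~~ ia_accept q /\ C = Cbot q).
Proof.
rewrite /Phi !in_app_iff; split.
- case=> [|[|[|[|[|[|]]]]]].
  + by move/in_map_iff => [s [<- _]]; left; exists s.
  + by case=> [<-|[<-|[]]]; right; left; auto.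
  + by move/in_flat_map => [s [_ [<-|[<-|[]]]]]; do 2 right; left; exists s; [exists true|exists false].
  + by case=> [<-|[<-|[]]]; do 3 right; left; [exists true|exists false].
  + move/in_flat_map => [s [_ /in_flat_map [m [_ /in_map_iff [r [<- _]]]]]].
    by do 4 right; left; exists s, m, r.
  + move/in_flat_map => [l [_ /in_flat_map [m [_ /in_map_iff [r [<- _]]]]]].
    by do 5 right; left; exists l, m, r.
  + move/in_flat_map => [q [_]]; case: ifP => // nq [<-|[]].
    by do 6 right; exists q; rewrite nq.
- case; last case; last case; last case; last case; last case.
  + by move=> [s ->]; left; apply/in_map_iff; exists s; split => //; apply: In_enum.
  + by case=> ->; right; left; [left|right; left].
  + move=> [s [b ->]]; do 2 right; left; apply/in_flat_map; exists s; split; first exact: In_enum.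
    by case: b; [left|right; left].
  + by move=> [b ->]; do 3 right; left; case: b; [left|right; left].
  + move=> [s [m [r ->]]]; do 4 right; left; apply/in_flat_map; exists s; split; first exact: In_enum.
    apply/in_flat_map; exists m; split; first exact: In_enum.
    by apply/in_map_iff; exists r; split => //; apply: In_enum.
  + move=> [l [m [r ->]]]; do 5 right; left; apply/in_flat_map; exists l; split; first exact: In_enum.
    apply/in_flat_map; exists m; split; first exact: In_enum.
    by apply/in_map_iff; exists r; split => //; apply: In_enum.
  + move=> [q [nq ->]]; do 6 right; apply/in_flat_map; exists q; split; first exact: In_enum.
    by rewrite (negbTE nq); left.
Qed.

Lemma sound_cl w x y C : 1 <= x <= size w -> 1 <= y <= size w -> In C Phi ->
  ia_accepts A w \/ cl_concl C <> None -> clause_holds w (Iex w) x y C.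
Proof.
move=> hx hy /inPhi [[s ->]|[[->|->]|[[s [b ->]]|[[b ->]|[[s [m [r ->]]]|[[l [m [r ->]]]|[q [nq ->]]]]]]]] hacc.
- exact: s_D.
- exact: s_G1.
- exact: s_G2.
- exact: s_rd.
- exact: s_ro.
- exact: s_dg.
- exact: s_off.
- case: hacc => // hacc; exact: s_bot.
Qed.

Lemma sound w : ia_accepts A w -> models w Phi.
Proof.
move=> acc; exists (Iex w) => x y hx hy C HC.
by apply: sound_cl => //; left.
Qed.

Definition hyps_hold w (I : nat -> nat -> nat -> Prop) x y (C : clause Sigma) :=
  forall h, In h (cl_hyps C) -> hyp_holds w I x y h.

Lemma step w I x y C q : 1 <= x <= size w -> 1 <= y <= size w -> In C Phi ->
  cl_concl C = Some (idx q) -> clause_holds w I x y C ->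
  hyps_hold w (Iex w) x y C -> hyps_hold w I x y C ->
  I (idx (ia_conf A w y (x - y + 1))) x y.
Proof.
move=> hx hy HC e HI h1 h2.
have hn : cl_concl C <> None by rewrite e.
have := sound_cl hx hy HC (or_intror hn).
rewrite /clause_holds e => /(_ h1) /Iex_idx [_ <-].
by move: HI; rewrite /clause_holds e => /(_ h2).
Qed.

Lemma onth_some (w : seq Sigma) i : i < size w -> exists s, onth w i = Some s.
Proof. rewrite -onthTE; case: onth => // s _; by exists s. Qed.

Ltac hyps_tac := let h := fresh "h" in let Hin := fresh "Hin" in
  intros h Hin; repeat (destruct Hin as [<-|Hin];
     [cbv beta iota delta [hyp_holds unpred_val var_val] | ]); try (destruct Hin).

Lemma force w I : w <> [::] ->
  (forall x y, 1 <= x <= size w -> 1 <= y <= size w ->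
      forall C, In C Phi -> clause_holds w I x y C) -> ia_accepts A w.
Proof.
move=> wn HI.
have n1 : 1 <= size w by move: wn; case: (w).
have hD : forall x, 1 <= x <= size w -> I 0 x x.
  move=> x hx; have [s es] := @onth_some w (x.-1) ltac:(lia).
  have inC : In (CD s) Phi by apply/inPhi; left; exists s.
  apply: (HI x x hx hx _ inC); hyps_tac.
  by rewrite predk0 //; lia.
have hG : forall d y, 1 <= y -> y + d.+1 <= size w -> I 1 (y + d.+1) y.
  elim=> [|d IH] y hy hyd.
  - have inC : In CG1 Phi by apply/inPhi; right; left; left.
    apply: (HI _ _ _ _ _ inC); try lia; hyps_tac.
    + rewrite predkS; last lia. rewrite predk0; last lia.
      have -> : y + 1 - 1 = y by lia. apply: hD; lia.
    + rewrite predk0; lia.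
  - have inC : In CG2 Phi by apply/inPhi; right; left; right.
    apply: (HI _ _ _ _ _ inC); try lia; hyps_tac.
    + rewrite predkS; last lia. rewrite predk0; last lia.
      have -> : y + d.+2 - 1 = y + d.+1 by lia. apply: IH; lia.
    + rewrite predk0; lia.
have hS : forall t, 1 <= t <= size w -> forall x, t <= x <= size w ->
    I (idx (ia_conf A w t (x - t + 1))) x t.
  elim=> [|t IH] // ht x hxt.
  case: (posnP t) => [t0|tpos].
  - subst t. case: (eqVneq x 1) => [x1|xn1].
    + subst x. have [s es] := @onth_some w (0) ltac:(lia).
      have inC : In (Crd s (size w == 1)) Phi.
        by apply/inPhi; right; right; left; exists s, (size w == 1).
      apply: (step (q := @ia_delta_in Sigma A s sh la (if size w == 1 then sh else la)))
         (HI _ _ _ _ _ inC) _ _ => //; hyps_tac; rewrite ?predk0 //;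
         try (case: eqP => /= ?; lia).
    + have inC : In (Cro (x == size w)) Phi.
        by apply/inPhi; right; right; right; left; exists (x == size w).
      apply: (step (q := @ia_delta Sigma A la la (if x == size w then sh else la)))
         (HI _ _ _ _ _ inC) _ _ => //; try lia; hyps_tac; rewrite ?predk0 //; try lia;
         try (case: eqP => /= ?; lia).
  - have e1 : predk 1 t.+1 = t by rewrite /predk; lia.
    have e0 : predk 0 t.+1 = t.+1 by rewrite /predk; lia.
    case: (eqVneq x t.+1) => [xt|xnt].
    + subst x. have [s es] := @onth_some w (t) ltac:(lia).
      have inC : In (Cdg s (ia_conf A w t (t - t + 1)) (ia_conf A w t (t.+1 - t + 1))) Phi.
        by apply/inPhi; do 4 right; left; do 3 eexists.
      apply: (step (q := @ia_delta_in Sigma A s sh (ia_conf A w t (t - t + 1)) (ia_conf A w t (t.+1 - t + 1))) _ _ _ _ (HI _ _ _ _ _ inC)) => //; try lia; hyps_tac; rewrite ?e1 ?e0 //; try lia;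
        try (by right; right; split; [lia|]);
        apply: IH; lia.
    + have inC : In (Coff (ia_conf A w t ((x - 2) - t + 1)) (ia_conf A w t ((x - 1) - t + 1))
                          (ia_conf A w t (x - t + 1))) Phi.
        by apply/inPhi; do 5 right; left; do 3 eexists.
      have ex0 : predk 0 x = x by rewrite /predk; lia.
      have ex1 : predk 1 x = x - 1 by rewrite /predk; lia.
      have ex2 : predk 2 x = x - 2 by rewrite /predk; lia.
      apply: (step (q := @ia_delta Sigma A (ia_conf A w t ((x - 2) - t + 1)) (ia_conf A w t ((x - 1) - t + 1))
                          (ia_conf A w t (x - t + 1))) _ _ _ _ (HI _ _ _ _ _ inC)) => //; try lia; hyps_tac;
        rewrite ?e1 ?e0 ?ex0 ?ex1 ?ex2 //; try lia;
        try (by right; right; split; [lia|]);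
        try (by right; left; split; [|lia]);
        try (apply: IH; lia).
      have -> : x = t.+1 + (x - t.+2).+1 by lia.
      apply: hG; lia.
have Hn := hS (size w) ltac:(lia) (size w) ltac:(lia).
have e : size w - size w + 1 = 1 by lia.
rewrite e in Hn.
rewrite /ia_accepts; case: (boolP (ia_accept _)) => // nq.
have inC : In (Cbot (ia_conf A w (size w) 1)) Phi.
  by apply/inPhi; do 6 right; eexists; split; first exact: nq.
suff : False by []. apply: (HI (size w) (size w) _ _ _ inC); try lia; hyps_tac; rewrite ?predk0 //; lia.
Qed.

End Sim.

Theorem lemma5 (Sigma : finType) (A : IA Sigma) :
  exists Phi : formula Sigma,
    forall w : seq Sigma, w <> [::] -> (ia_accepts A w <-> models w Phi).
Proof.
exists (Phi A) => w wn; split; first exact: sound.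
move=> [I HI]; exact: (force wn HI).
Qed.
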